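(* Let $\mathfrak B,\mathfrak D^+,\mathfrak D^-$ be Banach spaces and let $I^+\colon\mathfrak D^+\to\mathfrak B$, $I^-\colon\mathfrak B\to\mathfrak D^-$ be injective continuous linear embeddings with dense ranges. Let $T\colon\mathfrak D^+\to\mathfrak D^-$ be a bounded linear operator, and let $T^\bullet=(I^-)^{-1}T(I^+)^{-1}$ be the (generally unbounded) operator in $\mathfrak B$ with domain $\operatorname{dom}T^\bullet=\{x\in I^+(\mathfrak D^+)\;:\;T(I^+)^{-1}x\in I^-(\mathfrak B)\}$, acting by $T^\bullet x=(I^-)^{-1}T(I^+)^{-1}x$. Suppose that for some bounded operator $A\in\mathcal B(\mathfrak B)$ the operator $T-I^-AI^+\colon\mathfrak D^+\to\mathfrak D^-$ has a bounded inverse. Then $T^\bullet$ is closed and densely defined.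
   Context: ''Has a bounded inverse'' means: the operator is a bijection of $\mathfrak D^+$ onto $\mathfrak D^-$ with bounded inverse. *)

(* Defs.v *)
From HB Require Import structures.
From mathcomp Require Import all_boot all_order all_algebra.
From mathcomp Require Import all_classical all_reals all_analysis.
Set Implicit Arguments. Unset Strict Implicit. Unset Printing Implicit Defensive.
Import Order.TTheory GRing.Theory Num.Theory.
Import numFieldNormedType.Exports.
Local Open Scope classical_set_scope.
Local Open Scope ring_scope.

Definition dom_bullet (Dp B Dm : Type) (Ip : Dp -> B) (Im : B -> Dm)
  (T : Dp -> Dm) : set B :=
  [set x | exists d, Ip d = x /\ exists b, Im b = T d].

(* Graph of T^bullet: pairs (x, y) with x = I^+ d and I^- y = T d.
   (I^+, I^- injective, so this is the graph of a function on dom_bullet.) *)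
Definition graph_bullet (Dp B Dm : Type) (Ip : Dp -> B) (Im : B -> Dm)
  (T : Dp -> Dm) : set (B * B) :=
  [set p | exists d, Ip d = p.1 /\ Im p.2 = T d].

Definition has_bounded_inverse (K : numFieldType) (X Y : normedModType K)
  (f : X -> Y) : Prop :=
  exists g : {linear Y -> X}, cancel f g /\ cancel g f /\ continuous g.

Definition closed_operator (K : numFieldType) (B : normedModType K)
  (G : set (B * B)) : Prop := closed G.

Definition densely_defined (K : numFieldType) (B : normedModType K)
  (D : set B) : Prop := dense D.

(* Main.v *)
Require Import Defs.
From HB Require Import structures.
From mathcomp Require Import all_boot all_order all_algebra.
From mathcomp Require Import all_classical all_reals all_analysis.
Import Order.TTheory GRing.Theory Num.Theory.
Import numFieldNormedType.Exports.
Local Open Scope classical_set_scope.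
Local Open Scope ring_scope.

Theorem mainTheorem1 (K : numFieldType)
  (B Dp Dm : completeNormedModType K)
  (Ip : {linear Dp -> B}) (Im : {linear B -> Dm})
  (T : {linear Dp -> Dm}) (A : {linear B -> B}) :
  injective Ip -> continuous Ip -> dense (range Ip) ->
  injective Im -> continuous Im -> dense (range Im) ->
  continuous T -> continuous A ->
  has_bounded_inverse (fun d : Dp => T d - Im (A (Ip d))) ->
  closed_operator (graph_bullet Ip Im T) /\
  densely_defined (dom_bullet Ip Im T).
Proof.
move=> Ipi Ipc Ipd Imi Imc Imd Tc Ac [g [gK [Kg gc]]].
have key : forall b : B, T (g (Im b)) = Im (b + A (Ip (g (Im b)))).
  move=> b; have := Kg (Im b) => /= /eqP; rewrite subr_eq => /eqP ->.
  by rewrite linearD.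
split.
  pose h := fun p : B * B => p.1 - Ip (g (Im (p.2 - A p.1))).
  have hc : continuous h.
    move=> p; apply: cvgB; first exact: cvg_fst.
    apply: (@continuous_comp _ _ _ (fun p : B * B => g (Im (p.2 - A p.1))) Ip); last exact: Ipc.
    apply: (@continuous_comp _ _ _ (fun p : B * B => Im (p.2 - A p.1)) g); last exact: gc.
    apply: (@continuous_comp _ _ _ (fun p : B * B => p.2 - A p.1) Im); last exact: Imc.
    apply: cvgB; first exact: cvg_snd.
    apply: (@continuous_comp _ _ _ fst A); first exact: cvg_fst.
    exact: Ac.
  have -> : graph_bullet Ip Im T = h @^-1` [set 0].
    rewrite /graph_bullet /h; apply/seteqP; split => -[x y] /=.
      move=> [d [<- Hy]]; apply/eqP; rewrite subr_eq0; apply/eqP.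
      apply: f_equal; rewrite -[d in LHS]gK /=; apply: f_equal.
      by rewrite linearB Hy.
    move/eqP; rewrite subr_eq0 => /eqP Hx; exists (g (Im (y - A x))); split; first by rewrite -Hx.
    by rewrite key -Hx subrK.
  rewrite /closed_operator; move: (continuous_closedP h) => [+ _].
  move=> /(_ hc); apply.
  apply: accessible_closed_set1; apply: hausdorff_accessible.
  exact: norm_hausdorff.
move=> O [x Ox] Oo.
have [z [Od [d _ Hd]]] := Ipd O (ex_intro _ x Ox) Oo.
pose U := (Ip \o g) @^-1` O.
have Uo : open U.
  apply: open_comp => // z0 _; apply: continuous_comp; [exact: gc | exact: Ipc].
have [w [Ub [b _ Hb]]] : U `&` range Im !=set0.
  apply: (Imd U).
  exists (T d - Im (A (Ip d))); rewrite /U /preimage /= gK Hd //.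
  exact: Uo.
exists (Ip (g (Im b))); split; first by move: Ub; rewrite /U /preimage /= -Hb.
exists (g (Im b)); split => //; exists (b + A (Ip (g (Im b)))).
by rewrite key.
Qed.
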